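(* Let $\mathcal T\in\mathbb R^{I_1\times\cdots\times I_N}$ and let $R\le\min_n I_n$. On tuples $(\mathbf X^{(1)},\dots,\mathbf X^{(N)})$ with $\mathbf X^{(n)}\in\mathbb R^{I_n\times R}$ of full column rank define $$\mathcal L(\mathbf X^{(1)},\dots,\mathbf X^{(N)})=\sum_{r=1}^R\sum_{i_1,\dots,i_N}t_{i_1\dots i_N}x^{(1)}_{i_1r}\cdots x^{(N)}_{i_Nr}-\tfrac12\sum_{n=1}^N\log\det\big(\mathbf X^{(n)T}\mathbf X^{(n)}\big).$$ Then the tuple is a critical point of $\mathcal L$ if and only if $\mathbf T_{(n)}\big(\bigodot_{m\ne n}\mathbf X^{(m)}\big)=\mathbf X^{(n)}(\mathbf X^{(n)T}\mathbf X^{(n)})^{-1}$ for every $n$. Moreover, at any critical point: (i) for every $i\in\{1,\dots,N\}$ and every $r\in\{1,\dots,R\}$, the vector $\mathbf w\in\mathbb R^{I_i}$ with entries $w_{a}=\sum_{i_j,\,j\ne i}t_{i_1\dots i_{i-1}\,a\,i_{i+1}\dots i_N}\prod_{j\ne i}x^{(j)}_{i_j r}$ lies in the column span of $\mathbf X^{(i)}$; (ii) the tensor $\mathcal Z$ with entries $z_{j_1\dots j_N}=\sum_{i_1,\dots,i_N}t_{i_1\dots i_N}x^{(1)}_{i_1j_1}\cdots x^{(N)}_{i_Nj_N}$ satisfies, for every $p\in\{1,\dots,N\}$ and all $r,s\in\{1,\dots,R\}$, $z_{j_1\dots j_N}=\delta_{rs}$ whenever $j_m=r$ for all $m\ne p$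 and $j_p=s$; (iii) with $\mathcal Y=[\![\mathbf X^{(1)},\dots,\mathbf X^{(N)}]\!]$, for each $i$ the $I_i\times I_i$ matrix $\mathbf T_{(i)}\mathbf Y_{(i)}^T$, with entries $\sum_{i_j,\,j\ne i}t_{\dots a\dots}\,y_{\dots b\dots}$ (index $a$, resp. $b$, in mode $i$ and all other indices summed), equals $\mathbf X^{(i)}\mathbf X^{(i)\dagger}$, the orthogonal projector onto the column space of $\mathbf X^{(i)}$.
   Context: $[\![\mathbf B^{(1)},\dots,\mathbf B^{(N)}]\!]$ denotes the tensor with entries $\sum_{r=1}^R\prod_{m}b^{(m)}_{i_m r}$. For matrices $\mathbf C^{(m)}\in\mathbb R^{I_m\times R}$ ($m\ne n$), $\mathbf T_{(n)}\big(\bigodot_{m\ne n}\mathbf C^{(m)}\big)$ denotes the $I_n\times R$ matrix with entries $\sum_{i_m,\,m\ne n}t_{i_1\dots i_N}\prod_{m\ne n}c^{(m)}_{i_m r}$. $\mathbf M^\dagger$ is the Moore–Penrose pseudoinverse; $\delta_{rs}$ is the Kronecker delta. *)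

(* Defs.v *)
From HB Require Import structures.
From mathcomp Require Import all_boot all_order all_algebra.
From mathcomp Require Import boolp classical_sets reals topology normedtype derive exp.
Set Implicit Arguments. Unset Strict Implicit. Unset Printing Implicit Defensive.
Import Order.TTheory GRing.Theory Num.Theory numFieldNormedType.Exports.
Local Open Scope ring_scope.

Section TensorDefs.
Variable R : realType.
Variable N : nat.
Variable I : 'I_N -> nat.
Variable Rk : nat.

Definition midx := {dffun forall n : 'I_N, 'I_(I n)}.
Definition tensor := midx -> R.
Definition factors := forall n : 'I_N, 'M[R]_(I n, Rk).

Definition tfit (T : tensor) (X : factors) : R :=
  \sum_(r < Rk) \sum_(idx : midx) T idx * \prod_(n < N) X n (idx n) r.

Definition lossL (T : tensor) (X : factors) : R :=
  tfit T X - 2^-1 * \sum_(n < N) ln (\det ((X n)^T *m X n)).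

Definition critical (T : tensor) (X : factors) : Prop :=
  forall E : factors,
    let f := fun t : R => lossL T (fun n => X n + t *: E n) in
    derivable f 0 1 /\ 'D_1 f 0 = 0.

(* T_(n) (Khatri-Rao_{m <> n} X^(m)) : an I_n x R matrix *)
Definition mttkrp (T : tensor) (X : factors) (n : 'I_N) : 'M[R]_(I n, Rk) :=
  \matrix_(a < I n, r < Rk)
     \sum_(idx : midx | idx n == a) T idx * \prod_(m < N | m != n) X m (idx m) r.

Definition ztensor (T : tensor) (X : factors) (j : {ffun 'I_N -> 'I_Rk}) : R :=
  \sum_(idx : midx) T idx * \prod_(m < N) X m (idx m) (j m).

Definition cpd (X : factors) (idx : midx) : R :=
  \sum_(r < Rk) \prod_(m < N) X m (idx m) r.

Definition unfold_prod (T Y : tensor) (i : 'I_N) : 'M[R]_(I i) :=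
  \matrix_(a < I i, b < I i)
    \sum_(idx : midx | idx i == a)
      \sum_(idx' : midx | (idx' i == b) && [forall j, (j != i) ==> (idx j == idx' j)])
        T idx * Y idx'.
End TensorDefs.

Definition penrose (R : realType) m n (A : 'M[R]_(m, n)) (B : 'M[R]_(n, m)) : Prop :=
  [/\ A *m B *m A = A, B *m A *m B = B,
      (A *m B)^T = A *m B & (B *m A)^T = B *m A].

Definition mp_pinv (R : realType) m n (A : 'M[R]_(m, n)) : 'M[R]_(n, m) :=
  match pselect (exists B, penrose A B) with
  | left h => projT1 (cid h)
  | right _ => 0
  end.

(* Main.v *)
Require Import Defs.
From HB Require Import structures.
From mathcomp Require Import all_boot all_order all_algebra.
From mathcomp Require Import boolp classical_sets reals topology normedtype derive exp.
From mathcomp Require Import functions realfun perm.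
Import Order.TTheory GRing.Theory Num.Theory numFieldNormedType.Exports.
Set Implicit Arguments. Unset Strict Implicit.
Local Open Scope ring_scope.


Section Der.
Variable R : realType.

Lemma isd_sum (I : finType) (P : pred I) (h : I -> R -> R) (dh : I -> R) (x : R) :
  (forall i, is_derive x 1 (h i) (dh i)) ->
  is_derive x 1 (fun t => \sum_(i | P i) h i t) (\sum_(i | P i) dh i).
Proof.
move=> H; rewrite -fct_sumE.
elim/big_ind2: _ => //; first exact: is_derive_cst.
by move=> f df g dg ? ?; apply: is_deriveD.
Qed.

Lemma isd_mul (f g : R -> R) (df dg x : R) :
  is_derive x 1 f df -> is_derive x 1 g dg ->
  is_derive x 1 (fun t => f t * g t) (f x * dg + g x * df).
Proof. by move=> Hf Hg; have := is_deriveM Hf Hg. Qed.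

Lemma isd_cst (a x : R) : is_derive x 1 (fun _ : R => a) 0.
Proof. exact: is_derive_cst. Qed.

Lemma isd_lin (a b x : R) : is_derive x 1 (fun t : R => a + t * b) b.
Proof.
have H := @isd_mul id (fun _ => b) 1 0 x (is_derive_id x 1) (isd_cst b x).
have := is_deriveD (isd_cst a x) H.
by rewrite /= mulr0 add0r mulr1 add0r.
Qed.

Lemma isd_prod (I : finType) (P : pred I) (h : I -> R -> R) (dh : I -> R) (x : R) :
  (forall i, is_derive x 1 (h i) (dh i)) ->
  is_derive x 1 (fun t => \prod_(i | P i) h i t)
     (\sum_(i | P i) dh i * \prod_(j | P j && (j != i)) h j x).
Proof.
move=> H.
suff: forall n (P : pred I), #|P| = n -> is_derive x 1 (fun t => \prod_(i | P i) h i t)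
     (\sum_(i | P i) dh i * \prod_(j | P j && (j != i)) h j x) by apply.
elim=> [|n IH] {}P cP.
  have P0 : P =1 pred0 by apply/card0_eq.
  rewrite (eq_bigl _ _ P0) big_pred0_eq.
  under eq_fun do rewrite (eq_bigl _ _ P0) big_pred0_eq.
  exact: isd_cst.
have [i0 Pi0] : exists i0, P i0.
  by apply/existsP; rewrite -[[exists _, _]]negbK negb_exists; apply/negP=> /forallP H0;
     move: cP; rewrite (@eq_card0 _ P) // => i; apply/negbTE/H0.
have cP' : #|[pred i | P i && (i != i0)]| = n.
  have Pi0' : i0 \in P by [].
  by move: cP; rewrite (cardD1 i0) Pi0' add1n => -[<-]; apply: eq_card => i; rewrite !inE andbC.
have IH' := IH _ cP'; rewrite /= in IH'.
under eq_fun do rewrite (bigD1 i0) //=.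
have K := (@isd_mul (h i0) (fun t => \prod_(i | P i && (i != i0)) h i t) _ _ x (H i0) IH').
apply: (is_derive_eq K).
rewrite [RHS](bigD1 i0) //= addrC [X in _ + X = _]mulrC; congr (_ + _).
rewrite mulr_sumr; apply: eq_bigr => i /andP[Pi ni0].
rewrite [in RHS](bigD1 i0) /=; last by apply/andP; split => //; rewrite eq_sym.
rewrite mulrCA; congr (_ * (_ * _)).
by apply: eq_bigl => j; rewrite andbAC.
Qed.

End Der.


Section Det.
Variable R : realType.

Lemma isd_cmul (c : R) (f : R -> R) (df x : R) :
  is_derive x 1 f df -> is_derive x 1 (fun t => c * f t) (c * df).
Proof.
move=> H; have := @isd_mul R (fun _ => c) f 0 df x (isd_cst c x) H.
by rewrite mulr0 addr0.
Qed.

Lemma isd_det n (F : R -> 'M[R]_n) (dF : 'M[R]_n) :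
  (forall i j, is_derive (0:R) 1 (fun t => F t i j) (dF i j)) -> F 0 = 1%:M ->
  is_derive (0:R) 1 (fun t => \det (F t)) (\tr dF).
Proof.
move=> HF F0.
have H := isd_sum predT (h := fun (s : 'S_n) (t : R) => (-1) ^+ s * \prod_(i | predT i) F t i (s i))
  (fun s : 'S_n => isd_cmul ((-1) ^+ s) (isd_prod predT (h := fun i t => F t i (s i)) (fun i => HF i (s i)))).
apply: (is_derive_eq H).
rewrite F0 (bigD1 (1%g : 'S_n)) //= odd_perm1 expr0 mul1r [X in _ + X]big1 ?addr0.
  rewrite /mxtrace; apply: eq_bigr => i _; rewrite perm1 big1 ?mulr1 // => j /= ji.
  by rewrite perm1 mxE eqxx.
move=> s s1; rewrite big1 ?mulr0 // => i _.
case: (pickP [pred j | (j != i) && (s j != j)]) => [j /andP[ji sj] | Hs].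
  by rewrite (bigD1 j) //= mxE eq_sym (negbTE sj) mulr0n mul0r mulr0.
exfalso; move/negP: s1; apply; apply/eqP/permP => k; rewrite perm1.
have Hk : forall k, k != i -> s k = k.
  by move=> k' k'i; move: (Hs k') => /=; rewrite k'i /= => /negbFE/eqP.
case: (eqVneq k i) => [-> | ki]; last exact: Hk.
apply/eqP; apply/negP => /negP si.
have := Hk (s i) si.
by move/perm_inj => E; rewrite E eqxx in si.
Qed.
End Det.


Section LA.
Variable R : realType.

Lemma tr_gramE p q (Y : 'M[R]_(p, q)) : \tr (Y^T *m Y) = \sum_j \sum_i Y i j ^+ 2.
Proof. by rewrite /mxtrace; apply: eq_bigr => j _; rewrite mxE; apply: eq_bigr => i _; rewrite mxE expr2. Qed.

Lemma tr_gram_ge0 p q (Y : 'M[R]_(p, q)) : 0 <= \tr (Y^T *m Y).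
Proof. by rewrite tr_gramE; apply: sumr_ge0 => j _; apply: sumr_ge0 => i _; apply: sqr_ge0. Qed.

Lemma tr_gram_eq0 p q (Y : 'M[R]_(p, q)) : \tr (Y^T *m Y) = 0 -> Y = 0.
Proof.
rewrite tr_gramE => H; apply/matrixP => i j; rewrite mxE.
have H1 : \sum_i Y i j ^+ 2 = 0.
  by apply: (psumr_eq0P _ H) => // j1 _; apply: sumr_ge0 => *; apply: sqr_ge0.
have H2 : Y i j ^+ 2 = 0.
  by apply: (psumr_eq0P _ H1) => // i1 _; apply: sqr_ge0.
by apply/eqP; rewrite -sqrf_eq0 H2.
Qed.

Lemma gram_comb_unit m k (X : 'M[R]_(m, k)) (s : R) :
  \rank X = k -> 0 <= s <= 1 ->
  s *: (X^T *m X) + (1 - s) *: 1%:M \in unitmx.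
Proof.
move=> rk /andP[s0 s1].
set M := _ + _.
rewrite -row_free_unit -kermx_eq0; apply/eqP.
set K := kermx M.
have KM : K *m M = 0 by exact: mulmx_ker.
clearbody K.
have E : K *m M *m K^T = s *: ((X *m K^T)^T *m (X *m K^T)) + (1 - s) *: ((K^T)^T *m K^T).
  rewrite /M mulmxDr mulmxDl; congr (_ + _); rewrite -scalemxAr -scalemxAl; congr (_ *: _).
    by rewrite trmx_mul trmxK !mulmxA.
  by rewrite mulmx1 trmxK.
have T0 : s * \tr ((X *m K^T)^T *m (X *m K^T)) + (1 - s) * \tr ((K^T)^T *m K^T) = 0.
  by rewrite -!mxtraceZ -mxtraceD -E KM mul0mx mxtrace0.
have g1 := tr_gram_ge0 (X *m K^T); have g2 := tr_gram_ge0 (K^T).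
have a0 : 0 <= s * \tr ((X *m K^T)^T *m (X *m K^T)) by apply: mulr_ge0.
have b0 : 0 <= (1 - s) * \tr ((K^T)^T *m K^T).
  by apply: mulr_ge0 => //; rewrite subr_ge0.
have [A0 B0] : s * \tr ((X *m K^T)^T *m (X *m K^T)) = 0 /\ (1 - s) * \tr ((K^T)^T *m K^T) = 0.
  by move/eqP: T0; rewrite paddr_eq0 // => /andP[/eqP -> /eqP ->].
have [s1'|s1'] := eqVneq s 1.
  move: A0; rewrite s1' mul1r => /tr_gram_eq0 XK.
  have : K *m X^T = 0 by rewrite -[K]trmxK -trmx_mul XK trmx0.
  move/eqP; rewrite mulmx_free_eq0 ?(eqP _) //.
    by move/eqP.
  by rewrite /row_free mxrank_tr rk.
move: B0 => /eqP; rewrite mulf_eq0 subr_eq0 eq_sym (negbTE s1') /= => /eqP/tr_gram_eq0 KT.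
by rewrite -[K]trmxK KT trmx0.
Qed.

Lemma gram_unit m k (X : 'M[R]_(m, k)) : \rank X = k -> X^T *m X \in unitmx.
Proof.
move=> rk; have := gram_comb_unit (s := 1) rk; rewrite ler01 lexx => /(_ isT).
by rewrite scale1r subrr scale0r addr0.
Qed.

Lemma gram_det_pos m k (X : 'M[R]_(m, k)) : \rank X = k -> 0 < \det (X^T *m X).
Proof.
move=> rk; set A := X^T *m X.
pose Q : 'M[{poly R}]_k := \matrix_(i, j) ('X * (A i j)%:P + (1 - 'X) * ((1%:M : 'M[R]_k) i j)%:P).
have QE : forall s, (\det Q).[s] = \det (s *: A + (1 - s) *: 1%:M).
  move=> s; rewrite -horner_evalE -det_map_mx; congr (\det _).
  by apply/matrixP => i j; rewrite !mxE /= horner_evalE !hornerE.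
rewrite ltNge; apply/negP => Ale0.
have [x /andP[x0 x1] rx] : exists2 x, 0 <= x <= 1 & root (- \det Q) x.
  apply: poly_ivt; first exact: ler01.
  rewrite !hornerN !QE scale0r add0r subr0 scale1r det1 subrr scale0r addr0 scale1r.
  by rewrite oppr_le0 ler01 oppr_ge0.
have := gram_comb_unit (s := x) rk; rewrite x0 x1 => /(_ isT).
rewrite unitmxE unitfE -QE; move: rx; rewrite /root hornerN oppr_eq0 => /eqP ->.
by rewrite eqxx.
Qed.

End LA.


Section LD.
Variable R : realType.

Lemma deriv_logdet m k (Y E : 'M[R]_(m, k)) : \rank Y = k ->
  is_derive (0:R) 1 (fun t => ln (\det ((Y + t *: E)^T *m (Y + t *: E))))
    (2 * \sum_a \sum_r E a r * (Y *m invmx (Y^T *m Y)) a r).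
Proof.
move=> rk.
set A := Y^T *m Y; have Au := gram_unit rk; have Apos := gram_det_pos rk.
set Ai := invmx A.
pose F := fun t : R => Ai *m ((Y + t *: E)^T *m (Y + t *: E)).
have detE : forall t, \det ((Y + t *: E)^T *m (Y + t *: E)) = \det A * \det (F t).
  by move=> t; rewrite -det_mulmx /F mulmxA mulmxV // mul1mx.
have F0 : F 0 = 1%:M by rewrite /F scale0r addr0 mulVmx.
pose dF := Ai *m (Y^T *m E + E^T *m Y).
have HF : forall i j, is_derive (0:R) 1 (fun t => F t i j) (dF i j).
  move=> i j.
  have -> : (fun t => F t i j) = (fun t => \sum_(l | true) Ai i l *
      \sum_(p | true) ((Y p l + t * E p l) * (Y p j + t * E p j))).
    apply: funext => t; rewrite /F !mxE; apply: eq_bigr => l _; rewrite !mxE.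
    by congr (_ * _); apply: eq_bigr => p _; rewrite !mxE.
  have K := isd_sum predT (fun l => isd_cmul (Ai i l) (isd_sum predT
     (fun p => isd_mul (isd_lin (Y p l) (E p l) 0) (isd_lin (Y p j) (E p j) 0)))).
  apply: (is_derive_eq K).
  rewrite /dF !mxE; apply: eq_bigr => l _; rewrite !mxE; congr (_ * _).
  rewrite -big_split; apply: eq_bigr => p _; rewrite !mxE !mul0r !addr0.
  by rewrite /= [Y p j * _]mulrC.
have Hdet := isd_det HF F0.
have Hd2 : is_derive (0:R) 1 (fun t => \det ((Y + t *: E)^T *m (Y + t *: E))) (\det A * \tr dF).
  by under eq_fun do rewrite detE; exact: isd_cmul.
have Hln : is_derive ((fun t => \det ((Y + t *: E)^T *m (Y + t *: E))) 0) 1 (@ln R) (\det A)^-1.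
  by rewrite /= scale0r addr0; apply: is_derive1_ln.
have := is_derive1_comp Hln Hd2.
move=> H; apply: (is_derive_eq H).
rewrite mulKf; last by rewrite gt_eqF.
have AiT : Ai^T = Ai by rewrite /Ai trmx_inv /A trmx_mul trmxK.
have S_tr : \sum_a \sum_r E a r * (Y *m Ai) a r = \tr (E^T *m (Y *m Ai)).
  rewrite /mxtrace; under [RHS]eq_bigr do (rewrite mxE; under eq_bigr do rewrite mxE).
  by rewrite exchange_big.
have t1 : \tr (Ai *m (Y^T *m E)) = \tr (E^T *m (Y *m Ai)).
  by rewrite -mxtrace_tr !trmx_mul AiT trmxK !mulmxA.
have t2 : \tr (Ai *m (E^T *m Y)) = \tr (E^T *m (Y *m Ai)).
  by rewrite mxtrace_mulC !mulmxA.
by rewrite /dF mulmxDr mxtraceD t1 t2 -S_tr mulr_natl mulr2n.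
Qed.

End LD.


Section Main.
Variables (R : realType) (N : nat) (I : 'I_N -> nat) (Rk : nat).
Variables (T : tensor R I) (X : factors R I Rk).

Lemma deriv_tfit (E : factors R I Rk) :
  is_derive (0:R) 1 (fun t => tfit T (fun n => X n + t *: E n))
    (\sum_n \sum_a \sum_r E n a r * mttkrp T X n a r).
Proof.
have -> : (fun t => tfit T (fun n => X n + t *: E n)) = (fun t => \sum_(r | true)
   \sum_(idx : midx I | true) T idx * \prod_(n | true) (X n (idx n) r + t * E n (idx n) r)).
  apply: funext => t; rewrite /tfit; apply: eq_bigr => r _; apply: eq_bigr => idx _.
  by congr (_ * _); apply: eq_bigr => n _; rewrite !mxE.
have K := isd_sum predT (fun r : 'I_Rk => isd_sum predT (fun idx : midx I => isd_cmul (T idx)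
   (isd_prod predT (fun n => isd_lin (X n (idx n) r) (E n (idx n) r) 0)))).
apply: (is_derive_eq K) => /=.
under eq_bigr do under eq_bigr do rewrite mulr_sumr.
under eq_bigr do rewrite exchange_big.
rewrite exchange_big; apply: eq_bigr => n _.
rewrite [RHS]exchange_big; apply: eq_bigr => r _.
rewrite (partition_big (fun idx : midx I => idx n) predT) //.
apply: eq_bigr => a _; rewrite mxE mulr_sumr.
apply: eq_big => [idx|idx /eqP <-] //.
rewrite mulrCA; congr (_ * (_ * _)).
by apply: eq_big => // m; rewrite mul0r addr0.
Qed.

Hypothesis rk : forall n, \rank (X n) = Rk.

Definition Gm (n : 'I_N) : 'M[R]_(I n, Rk) :=
  mttkrp T X n - X n *m invmx ((X n)^T *m X n).

Lemma deriv_L (E : factors R I Rk) :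
  is_derive (0:R) 1 (fun t => lossL T (fun n => X n + t *: E n))
    (\sum_n \sum_a \sum_r E n a r * Gm n a r).
Proof.
have H1 := deriv_tfit E.
have H2 := isd_cmul (2^-1) (isd_sum predT (fun n => deriv_logdet (E n) (rk n))).
have H := is_deriveB H1 H2.
apply: (is_derive_eq H).
rewrite mulr_sumr -sumrB; apply: eq_bigr => n _.
rewrite mulrA mulVf ?mul1r ?pnatr_eq0 // -sumrB; apply: eq_bigr => a _.
by rewrite -sumrB; apply: eq_bigr => r _; rewrite /Gm !mxE mulrBr.
Qed.

End Main.


Lemma pinv_gram (R : realType) m k (Y : 'M[R]_(m, k)) : \rank Y = k ->
  Y *m mp_pinv Y = Y *m invmx (Y^T *m Y) *m Y^T.
Proof.
move=> rk; have Au := gram_unit rk.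
have AiT : (invmx (Y^T *m Y))^T = invmx (Y^T *m Y) by rewrite trmx_inv trmx_mul trmxK.
have PY : Y *m invmx (Y^T *m Y) *m Y^T *m Y = Y.
  by rewrite -!mulmxA (mulVmx Au) mulmx1.
have PT : (Y *m invmx (Y^T *m Y) *m Y^T)^T = Y *m invmx (Y^T *m Y) *m Y^T.
  by rewrite !trmx_mul trmxK AiT mulmxA.
rewrite /mp_pinv; case: pselect => [h|nh]; last first.
  exfalso; apply: nh; exists (invmx (Y^T *m Y) *m Y^T); split.
  - by rewrite mulmxA PY.
  - by rewrite -[_ *m Y^T *m Y]mulmxA mulVmx // mul1mx.
  - by rewrite mulmxA PT.
  - by rewrite -mulmxA mulVmx // trmx1.
case: (cid h) => B [p1 _ p3 _] /=.
have e0 : Y *m B = ((Y *m invmx (Y^T *m Y) *m Y^T) *m (Y *m B))^T.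
  by rewrite mulmxA PY p3.
by rewrite e0 trmx_mul p3 PT !mulmxA p1.
Qed.

Section Fin.
Variables (R : realType) (N : nat) (I : 'I_N -> nat) (Rk : nat).
Variables (T : tensor R I) (X : factors R I Rk).
Hypothesis rk : forall n, \rank (X n) = Rk.

Lemma crit_iff : critical T X <-> (forall n, mttkrp T X n = X n *m invmx ((X n)^T *m X n)).
Proof.
split.
  move=> H; have [_ D0] := H (fun n => Gm T X n).
  have DV := deriv_L T rk (fun n => Gm T X n).
  move: D0; rewrite /= derive_val => D0 n.
  apply/eqP; rewrite -subr_eq0; apply/eqP; change (Gm T X n = 0); apply/matrixP => a r; rewrite mxE.
  have sq : forall x : R, 0 <= x * x by move=> x; rewrite -expr2 sqr_ge0.
  have H1 : \sum_a \sum_r Gm T X n a r * Gm T X n a r = 0.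
    apply: (psumr_eq0P _ D0) => // n' _; apply: sumr_ge0 => a' _; apply: sumr_ge0 => *; exact: sq.
  have H2 : \sum_r Gm T X n a r * Gm T X n a r = 0.
    apply: (psumr_eq0P _ H1) => // a' _; apply: sumr_ge0 => *; exact: sq.
  have H3 : Gm T X n a r * Gm T X n a r = 0.
    apply: (psumr_eq0P _ H2) => // r' _; exact: sq.
  move/eqP: H3; rewrite mulf_eq0 orbb => /eqP G0.
  by rewrite [RHS]mxE -G0 /Gm !mxE.
move=> H E /=.
have DV := deriv_L T rk E.
split; first exact: ex_derive.
rewrite derive_val big1 // => n _; rewrite big1 // => a _; rewrite big1 // => r _.
by rewrite /Gm H subrr mxE mulr0.
Qed.


Section Parts.
Hypothesis Hm : forall n, mttkrp T X n = X n *m invmx ((X n)^T *m X n).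

Lemma part_i (i : 'I_N) (r : 'I_Rk) :
  exists c : 'cV[R]_Rk, col r (mttkrp T X i) = X i *m c.
Proof.
exists (col r (invmx ((X i)^T *m X i))); rewrite Hm.
apply/colP => k; rewrite !mxE; apply: eq_bigr => l _; by rewrite !mxE.
Qed.

Lemma part_ii (p : 'I_N) (r s : 'I_Rk) (j : {ffun 'I_N -> 'I_Rk}) :
  (forall m, m != p -> j m = r) -> j p = s -> ztensor T X j = (r == s)%:R.
Proof.
move=> hj hs.
have -> : ztensor T X j = ((X p)^T *m mttkrp T X p) s r.
  rewrite /ztensor mxE (partition_big (fun idx : midx I => idx p) predT) //.
  apply: eq_bigr => a _; rewrite !mxE mulr_sumr.
  apply: eq_big => [idx|idx /eqP <-] //.
  rewrite (bigD1 p) //= hs mulrCA; congr (_ * (_ * _)).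
  by apply: eq_bigr => m mp; rewrite hj.
rewrite Hm mulmxA mulmxV ?gram_unit // mxE eq_sym.
by [].
Qed.

Lemma part_iii (i : 'I_N) : unfold_prod T (cpd X) i = X i *m mp_pinv (X i).
Proof.
rewrite pinv_gram // -Hm.
apply/matrixP => a b; rewrite !mxE.
rewrite (eq_bigr (fun idx : midx I => \sum_(r < Rk) (T idx * \prod_(m < N | m != i) X m (idx m) r) * X i b r)).
  rewrite exchange_big; apply: eq_bigr => r _; rewrite !mxE mulr_suml.
  by apply: eq_bigr => idx _.
move=> idx /eqP idxa.
pose u : midx I := finfun (dfwith (fun j => idx j) b).
rewrite (big_pred1 u).
  rewrite /cpd mulr_sumr; apply: eq_bigr => r _.
  rewrite (bigD1 i) //= ffunE dfwith_in [RHS]mulrC mulrCA; congr (_ * (_ * _)).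
  by apply: eq_bigr => m mi; rewrite ffunE dfwith_out // eq_sym.
move=> idx' /=; apply/idP/eqP.
  case/andP => /eqP bi /forallP fa; apply/ffunP => j; rewrite ffunE.
  case: (eqVneq i j) => [<-|ij]; first by rewrite dfwith_in.
  by rewrite dfwith_out //; have := fa j; rewrite eq_sym ij /= => /eqP.
move=> ->; rewrite ffunE dfwith_in eqxx /=; apply/forallP => j; apply/implyP => ji.
by rewrite ffunE dfwith_out // eq_sym.
Qed.

End Parts.
End Fin.

Unset Implicit Arguments.
Theorem mainTheorem6 (R : realType) (N : nat) (I : 'I_N -> nat) (Rk : nat)
    (T : tensor R I) (X : factors R I Rk) :
  (forall n, (Rk <= I n)%N) ->
  (forall n, \rank (X n) = Rk) ->
  (critical T X <->
     (forall n, mttkrp T X n = X n *m invmx ((X n)^T *m X n)))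
  /\
  (critical T X ->
     [/\ (* (i) *)
         (forall (i : 'I_N) (r : 'I_Rk),
            exists c : 'cV[R]_Rk, col r (mttkrp T X i) = X i *m c),
         (* (ii) *)
         (forall (p : 'I_N) (r s : 'I_Rk) (j : {ffun 'I_N -> 'I_Rk}),
            (forall m, m != p -> j m = r) -> j p = s ->
            ztensor T X j = (r == s)%:R)
       & (* (iii) *)
         (forall i : 'I_N,
            unfold_prod T (cpd X) i = X i *m mp_pinv (X i))]).
Proof.
move=> hI hrk; split; first exact: (crit_iff T hrk).
move=> /(crit_iff T hrk) Hm; split.
- by move=> i r; exact: (part_i Hm).
- by move=> p r s j hj hs; apply: (part_ii hrk Hm hj hs).
- by move=> i; exact: (part_iii hrk Hm).
Qed.
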